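(* There is an absolute constant $C$ such that for all integers $b\ge 0$ and $q\ge 1$, with $n=2^b$, there is an arithmetic circuit using at most $C\,q\binom{n}{\downarrow q}$ gates $\oplus$ (and the identity element $0$) that, for every commutative monoid $(S,\oplus,0)$ and every $f:[n]\to S$, computes for every $Y\in\binom{[n]}{q}$ the value $e(Y)=\bigoplus_{x\in[n]\setminus Y} f(x)$.
   Context: $\binom{[n]}{q}$ is the family of $q$-element subsets of $[n]=\{1,\dots,n\}$, and $\binom{n}{\downarrow q}=\sum_{i=0}^{q}\binom{n}{i}$. An arithmetic circuit consists of input gates (one per $x\in[n]$, evaluating to $f(x)$), constant gates evaluating to $0$, and binary $\oplus$-gates, with designated output gates (one per $Y$); gate count refers to the number of $\oplus$-gates. *)

(* Defs.v *)
From mathcomp Require Import all_boot.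
Set Implicit Arguments. Unset Strict Implicit. Unset Printing Implicit Defensive.

Definition binom_down (n q : nat) : nat := \sum_(i < q.+1) 'C(n, i).

(* Gates of an arithmetic circuit over inputs indexed by 'I_n.
   Gates are listed in topological order; gate number k is the k-th element. *)
Inductive gate (n : nat) : Type :=
| GInput of 'I_n
| GZero
| GOp of nat & nat.

Definition circuit (n : nat) := seq (gate n).

Definition wf_circuit n (c : circuit n) : Prop :=
  forall k i j, k < size c -> nth (GZero n) c k = GOp n i j -> i < k /\ j < k.

Definition is_op n (g : gate n) : bool := if g is GOp _ _ then true else false.
Definition op_count n (c : circuit n) : nat := count (@is_op n) c.

Section Eval.
Variables (S : Type) (idx : S) (op : Monoid.com_law idx).

Definition eval_gate n (f : 'I_n -> S) (vals : seq S) (g : gate n) : S :=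
  match g with
  | GInput x => f x
  | GZero => idx
  | GOp i j => op (nth idx vals i) (nth idx vals j)
  end.

Definition eval_circuit n (c : circuit n) (f : 'I_n -> S) : seq S :=
  foldl (fun vals g => rcons vals (eval_gate f vals g)) [::] c.

Definition gate_value n (c : circuit n) (f : 'I_n -> S) (k : nat) : S :=
  nth idx (eval_circuit c f) k.
End Eval.

(* Main.v *)
Require Import Defs.
From mathcomp Require Import all_boot zify.
Set Implicit Arguments. Unset Strict Implicit. Unset Printing Implicit Defensive.

Section EvalLemmas.
Variables (S : Type) (idx : S) (op : Monoid.com_law idx) (n : nat) (f : 'I_n -> S).

Definition step := fun vals (g : gate n) => rcons vals (eval_gate op f vals g).

Lemma evalE (c : circuit n) : eval_circuit op c f = foldl step [::] c.
Proof. by []. Qed.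

Lemma foldl_prefix (c : circuit n) v i :
  i < size v -> nth idx (foldl step v c) i = nth idx v i.
Proof.
elim: c v => [|g c IH] v Hi //=.
by rewrite IH ?size_rcons ?(leqW Hi) // nth_rcons Hi.
Qed.

Lemma size_foldl (c : circuit n) v : size (foldl step v c) = size v + size c.
Proof.
elim: c v => [|g c IH] v /=; first by rewrite addn0.
by rewrite IH size_rcons addSnnS.
Qed.

Lemma gate_value_wf (c : circuit n) k : wf_circuit c -> k < size c ->
  gate_value op c f k = eval_gate op f (eval_circuit op c f) (nth (GZero n) c k).
Proof.
move=> W Hk; rewrite /gate_value !evalE.
set E := foldl step [::] (take k c).
have sE : size E = k by rewrite size_foldl /= size_take Hk.
have Hc : foldl step [::] c = foldl step E (nth (GZero n) c k :: drop k.+1 c).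
  by rewrite -(drop_nth _ Hk) -foldl_cat cat_take_drop.
rewrite {1}Hc /= foldl_prefix ?size_rcons ?sE // nth_rcons sE ltnn eqxx.
case Eg: (nth _ c k) => [x||i j] //=.
have [Hi Hj] := W _ _ _ Hk Eg.
rewrite Hc /= Eg /= foldl_prefix ?size_rcons ?sE ?(leqW Hi) //.
rewrite foldl_prefix ?size_rcons ?sE ?(leqW Hj) //.
by rewrite !nth_rcons sE Hi Hj.
Qed.
End EvalLemmas.
Lemma decode a d m : m < d -> (a*d+m) %/ d = a /\ (a*d+m) %% d = m.
Proof.
move=> H; have d0 : 0 < d by apply: leq_ltn_trans H.
by rewrite divnMDl // divn_small // addn0 modnMDl modn_small.
Qed.

Section Construction.
Variables (n q : nat).

Definition W := if 1 < q then n.+1 else 1.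
Definition col j := if 1 < q then j else 0.
Definition pre j := n.+1 + j.
Definition T0 := n.+1 + n.+1.
Definition cell i j := T0 + (n - i) * W + col j.
Definition O0 := T0 + n.+1 * W.
Definition sets : seq {set 'I_n} := enum predT.
Definition R0 := size sets.
Definition N0 := O0 + R0 * q.
Definition segidx l h := if l == 0 then pre h else cell l h.
Definition lo (s : seq nat) t := if t == 0 then 0 else (nth 0 s t.-1).+1.
Definition sq (Y : {set 'I_n}) := sort leq [seq val x | x <- enum Y].

Definition raw (k : nat) : gate n :=
  if k < n.+1 then
    (if k is k'.+1 then
       (if (insub k' : option 'I_n) is Some x then GInput x else GZero n)
     else GZero n)
  else if k < T0 then
    (let j := k - n.+1 in if j == 0 then GZero n else GOp n (pre j.-1) j)
  else if k < O0 then
    (let r := (k - T0) %/ W in let j' := (k - T0) %% W in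
     let i := n - r in let j := if 1 < q then j' else n in
     if i < j then GOp n i.+1 (cell i.+1 j) else GZero n)
  else
    (let r := (k - O0) %/ q in let u := (k - O0) %% q in
     let Y := nth set0 sets r in
     if #|Y| == q then
       (let s := sq Y in let t := q.-1 - u in
        GOp n (segidx (lo s t) (nth 0 s t))
              (if u == 0 then segidx (lo s q) n else k.-1))
     else GZero n).

Definition safe k (g : gate n) : gate n :=
  match g with GOp i j => if (i < k) && (j < k) then GOp n i j else GZero n | g => g end.
Definition gg k := safe k (raw k).
Definition circ : circuit n := mkseq gg N0.
Definition out (Y : {set 'I_n}) := O0 + index Y sets * q + q.-1.

Lemma W_gt0 : 0 < W. Proof. by rewrite /W; case: ifP. Qed.

Lemma wf_circ : wf_circuit circ.
Proof.
move=> k i j; rewrite size_mkseq => Hk; rewrite nth_mkseq // /gg.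
case: (raw k) => //= a b; case: ifP => // /andP[? ?] [<- <-]; done.
Qed.

Lemma raw_pre j : j <= n -> raw (pre j) = if j == 0 then GZero n else GOp n (pre j.-1) j.
Proof.
move=> Hj; rewrite /raw /pre /T0.
have -> : (n.+1 + j < n.+1) = false by lia.
have -> : (n.+1 + j < n.+1 + n.+1) = true by lia.
by rewrite /= addKn.
Qed.

Lemma col_lt j : j <= n -> col j < W.
Proof. by rewrite /col /W; case: ifP. Qed.

Lemma raw_cell i j : i <= n -> j <= n -> (1 < q) || (j == n) ->
  raw (cell i j) = if i < j then GOp n i.+1 (cell i.+1 j) else GZero n.
Proof.
move=> Hi Hj Hv; rewrite /raw.
have Wp := W_gt0; have Hc := col_lt Hj.
have -> : (cell i j < n.+1) = false by rewrite /cell /T0; set P := (n - i) * W; lia.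
have -> : (cell i j < T0) = false by rewrite /cell /T0; set P := (n - i) * W; lia.
have -> : (cell i j < O0) = true.
  rewrite /cell /O0.
  have : (n - i) * W + W <= n.+1 * W by rewrite -mulSnr leq_mul2r; apply/orP; right; lia.
  set P := (n - i) * W; set P2 := n.+1 * W; lia.
rewrite /= /cell -addnA addKn; have [-> ->] := decode (n - i) Hc.
rewrite subKn //.
suff -> : (if 1 < q then col j else n) = j by [].
by move: Hv; rewrite /col; case: (1 < q) => //= /eqP.
Qed.


Lemma raw_inp x : x < n ->
  raw x.+1 = if (insub x : option 'I_n) is Some y then GInput y else GZero n.
Proof. by move=> Hx; rewrite /raw ltnS Hx. Qed.

Lemma T0_O0 : T0 <= O0. Proof. by rewrite /O0 leq_addr. Qed.

Lemma raw_out r u : u < q ->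
  raw (O0 + r * q + u) =
    (let Y := nth set0 sets r in
     if #|Y| == q then
       (let s := sq Y in let t := q.-1 - u in
        GOp n (segidx (lo s t) (nth 0 s t))
              (if u == 0 then segidx (lo s q) n else (O0 + r * q + u).-1))
     else GZero n).
Proof.
move=> Hu; rewrite /raw.
have H1 := T0_O0.
have -> : (O0 + r * q + u < n.+1) = false by move: H1; rewrite /T0; set P := r * q; lia.
have -> : (O0 + r * q + u < T0) = false by set P := r * q; lia.
have -> : (O0 + r * q + u < O0) = false by set P := r * q; lia.
by rewrite -addnA addKn; have [-> ->] := decode r Hu.
Qed.


Lemma cell_lt i j : j <= n -> cell i j < O0.
Proof.
move=> Hj; have Hc := col_lt Hj; rewrite /cell /O0.
have : (n - i) * W + W <= n.+1 * W by rewrite -mulSnr leq_mul2r; apply/orP; right; lia.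
set P := (n - i) * W; set P2 := n.+1 * W; lia.
Qed.

Lemma T0_cell i j : T0 <= cell i j.
Proof. by rewrite /cell -addnA leq_addr. Qed.

Lemma segidx_lt l h : h <= n -> segidx l h < O0.
Proof.
move=> Hh; rewrite /segidx; case: ifP => _; last exact: cell_lt.
by apply: leq_trans T0_O0; rewrite /pre /T0; lia.
Qed.

Lemma O0_N0 : O0 <= N0. Proof. by rewrite /N0 leq_addr. Qed.


Section Sem.
Variables (S : Type) (idx : S) (op : Monoid.com_law idx) (f : 'I_n -> S).

Definition V k := gate_value op circ f k.
Definition F (x : nat) : S := if (insub x : option 'I_n) is Some y then f y else idx.
Definition seg i j := \big[op/idx]_(i <= x < j) F x.
Definition Bs (s : seq nat) l := \big[op/idx]_(l <= x < n | x \notin s) F x.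

Lemma V_eq k : k < N0 -> V k = eval_gate op f (eval_circuit op circ f) (gg k).
Proof.
move=> Hk; rewrite /V gate_value_wf; [by rewrite /circ nth_mkseq | exact: wf_circ | by rewrite size_mkseq].
Qed.

Lemma V_op k i j : k < N0 -> raw k = GOp n i j -> i < k -> j < k -> V k = op (V i) (V j).
Proof. by move=> Hk E Hi Hj; rewrite V_eq // /gg E /= Hi Hj. Qed.

Lemma V_zero k : k < N0 -> raw k = GZero n -> V k = idx.
Proof. by move=> Hk E; rewrite V_eq // /gg E. Qed.

Lemma V_inp x : x < n -> V x.+1 = F x.
Proof.
move=> Hx; have Hk : x.+1 < N0.
  have := T0_O0; have := O0_N0; rewrite /T0; lia.
rewrite V_eq // /gg raw_inp // /F. by case: insub.
Qed.

Lemma pre_lt j : j <= n -> pre j < N0.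
Proof. move=> Hj; have := T0_O0; have := O0_N0; rewrite /T0 /pre; lia. Qed.

Lemma V_pre j : j <= n -> V (pre j) = seg 0 j.
Proof.
elim: j => [|j IH] Hj.
  by rewrite V_zero ?raw_pre ?pre_lt // /seg big_geq.
rewrite (V_op (i:=pre j) (j:=j.+1)) ?raw_pre ?pre_lt //; last by rewrite /pre; lia.
  by rewrite IH ?(ltnW Hj) // V_inp // /seg big_nat_recr.
by rewrite /pre; lia.
Qed.

Lemma V_cell i j : j <= n -> (1 < q) || (j == n) -> i <= j -> V (cell i j) = seg i j.
Proof.
move=> Hj Hv; move Hd: (j - i) => d; elim: d i Hd => [|d IH] i Hd Hij.
  have eij : i = j by lia.
  subst i; rewrite V_zero ?raw_cell ?ltnn //; last exact: leq_trans (cell_lt _ Hj) O0_N0.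
  by rewrite /seg big_geq.
have lij : i < j by lia.
have Hk : cell i j < N0 by exact: leq_trans (cell_lt _ Hj) O0_N0.
rewrite (V_op (i:=i.+1) (j:=cell i.+1 j)) ?raw_cell ?lij //; first last.
- rewrite /cell ltn_add2r ltn_add2l ltn_mul2r W_gt0 /=; lia.
- have := T0_cell i j; rewrite /T0; lia.
- lia.
rewrite V_inp; last lia.
rewrite IH //; [by rewrite /seg (big_ltn lij) | lia].
Qed.

Lemma gap s t x : sorted ltn s -> t <= size s -> lo s t <= x ->
  (t < size s -> x < nth 0 s t) -> x \notin s.
Proof.
move=> ss ts lx hx; apply/negP=> xs.
have ks : index x s < size s by rewrite index_mem.
have ek : nth 0 s (index x s) = x := nth_index 0 xs.
have sl : sorted leq s by move: ss; rewrite ltn_sorted_uniq_leq => /andP[].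
case: (ltnP (index x s) t) => kt.
- have t0 : t != 0 by lia.
  have tl : t.-1 < size s by lia.
  have := @sorted_leq_nth nat leq leq_trans leqnn 0 s sl (index x s) t.-1 ks tl.
  move: lx; rewrite /lo (negbTE t0) ek => lx /(_ _); lia.
- have tl : t < size s by lia.
  have := @sorted_leq_nth nat leq leq_trans leqnn 0 s sl t (index x s) tl ks kt.
  rewrite ek; have := hx tl; lia.
Qed.

Lemma lo_le s t : sorted ltn s -> t < size s -> lo s t <= nth 0 s t.
Proof.
move=> ss ts; rewrite /lo; case: ifP => // /negbT t0.
have tl : t.-1 < size s by lia.
have := @sorted_ltn_nth nat ltn ltn_trans 0 s ss t.-1 t tl ts.
by apply; lia.
Qed.

Lemma split_B s t : sorted ltn s -> all (fun x => x < n) s -> t < size s ->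
  Bs s (lo s t) = op (seg (lo s t) (nth 0 s t)) (Bs s (lo s t.+1)).
Proof.
move=> ss sa ts.
have ltn_ : nth 0 s t < n by apply: (allP sa); rewrite mem_nth.
rewrite /Bs !big_mkcond (big_cat_nat _ (n := nth 0 s t)) ?lo_le //=; last exact: ltnW.
rewrite (big_ltn ltn_) mem_nth //= Monoid.mul1m; congr (op _ _).
  apply: eq_big_nat => x /andP[h1 h2].
  by rewrite (gap ss (ltnW ts) h1) // => _.
by rewrite /lo /= [RHS]big_mkcond.
Qed.

Lemma base_B s : sorted ltn s -> Bs s (lo s (size s)) = seg (lo s (size s)) n.
Proof.

move=> ss; rewrite /Bs big_mkcond; apply: eq_big_nat => x /andP[h1 h2].
by rewrite (gap ss (leqnn _) h1) // ltnn.
Qed.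


Lemma sq_sorted Y : sorted ltn (sq Y).
Proof.
rewrite ltn_sorted_uniq_leq sort_uniq (map_inj_uniq val_inj) enum_uniq /=.
apply: sort_sorted; exact: leq_total.
Qed.

Lemma sq_all Y : all (fun x => x < n) (sq Y).
Proof. apply/allP => x; rewrite mem_sort => /mapP [y _ ->]; exact: ltn_ord. Qed.

Lemma sq_size Y : size (sq Y) = #|Y|.
Proof. by rewrite size_sort size_map cardE. Qed.

Lemma mem_sq Y (x : 'I_n) : (val x \in sq Y) = (x \in Y).
Proof. by rewrite mem_sort (mem_map val_inj) mem_enum. Qed.

Lemma V_seg l h : l <= h -> h <= n -> (l == 0) || (1 < q) || (h == n) ->
  V (segidx l h) = seg l h.
Proof.
move=> lh hn; rewrite /segidx; case: eqP => [-> _|_ /= Hv].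
  exact: V_pre.
exact: V_cell.
Qed.

Lemma V_out (Y : {set 'I_n}) u : #|Y| = q -> u < q ->
  V (O0 + index Y sets * q + u) = Bs (sq Y) (lo (sq Y) (q.-1 - u)).
Proof.
move=> HY Hu0; set r := index Y sets; set s := sq Y.
have Ys : Y \in sets by rewrite /sets mem_enum.
have rR : r < R0 by rewrite /r /R0 index_mem.
have eY : nth set0 sets r = Y by rewrite nth_index.
have ss := sq_sorted Y; have sa := sq_all Y.
have sz : size s = q by rewrite sq_size.
have Hrq : r.+1 * q <= R0 * q by rewrite leq_mul2r rR orbT.
have qn0 : 0 < q by lia.
have lt_n t : t < q -> nth 0 s t < n by move=> Ht; apply: (allP sa); rewrite mem_nth // sz.
have v1 t : t < q -> V (segidx (lo s t) (nth 0 s t)) = seg (lo s t) (nth 0 s t).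
  move=> Ht; apply: V_seg; [by apply: lo_le; rewrite ?sz | exact: ltnW (lt_n _ Ht) |].
  case: (ltnP 1 q) => Hq; first by rewrite orbT.
  have -> : t = 0 by lia.
  by rewrite /lo.
have Hlq : lo s q <= n.
  by rewrite /lo; case: eqP => // _; have := lt_n q.-1; lia.
move: Hu0; elim: u=> [|u IH] Hu.
- have Hk : O0 + r * q + 0 < N0 by rewrite /N0; move: Hrq; rewrite mulSnr; set P := r * q; set P2 := R0 * q; lia.
  have E := raw_out r Hu; rewrite /= eY HY eqxx /= -/s in E.
  rewrite (V_op Hk E); first last.
  + by apply: leq_trans (segidx_lt _ (leqnn _)) _; set P := r * q; lia.
  + by apply: leq_trans (segidx_lt _ (ltnW (lt_n _ _))) _; [set P := r * q; lia | lia].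
  rewrite subn0 v1; last lia.
  rewrite V_seg //; last by rewrite eqxx !orbT.
  have bB := base_B ss; rewrite -/s sz in bB.
  rewrite -bB (split_B ss sa (t := q.-1)); last by rewrite sz; lia.
  by rewrite prednK.
- have Hk : O0 + r * q + u.+1 < N0 by rewrite /N0; move: Hrq; rewrite mulSnr; set P := r * q; set P2 := R0 * q; lia.
  have E := raw_out r Hu; rewrite /= eY HY eqxx /= -/s in E.
  have Hpk : n + n.+1 + n.+1 * W + r * q + u.+1 = O0 + r * q + u.
    by rewrite /O0 /T0; set P := r * q; set P2 := n.+1 * W; lia.
  rewrite Hpk in E.
  rewrite (V_op Hk E); first last.
  + set P := r * q; lia.
  + by apply: leq_trans (segidx_lt _ (ltnW (lt_n _ _))) _; [set P := r * q; lia | lia].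
  rewrite IH; last lia.
  rewrite v1; last lia.
  have -> : q.-1 - u = (q.-1 - u.+1).+1 by lia.
  rewrite -(split_B ss sa (t := q.-1 - u.+1)) // sz; lia.
Qed.

Lemma B0 (Y : {set 'I_n}) : Bs (sq Y) 0 = \big[op/idx]_(x in ~: Y) f x.
Proof.
rewrite /Bs big_mkord; apply: eq_big => [x|x _].
  by rewrite mem_sq in_setC.
by rewrite /F valK.
Qed.

End Sem.

Lemma count_mk (h : nat -> gate n) N :
  count (@is_op n) (mkseq h N) = \sum_(0 <= k < N) is_op (h k).
Proof.
elim: N => [|N IH]; first by rewrite big_geq.
by rewrite mkseqS -cats1 count_cat IH big_nat_recr //= addn0.
Qed.

Lemma block_le a m c (G : nat -> nat) : (forall u, u < m -> G (a + u) <= c) ->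
  \sum_(a <= k < a + m) G k <= m * c.
Proof.
elim: m => [|m IH] H; first by rewrite addn0 big_geq.
rewrite addnS big_nat_recr ?leq_addr // mulSnr leq_add //.
  by apply: IH => u Hu; apply: H; lia.
exact: H.
Qed.

Lemma out_count R' : 0 < q ->
  \sum_(O0 <= k < O0 + R' * q) is_op (raw k) <= q * \sum_(0 <= r < R') (#|nth set0 sets r| == q).
Proof.
move=> q0; elim: R' => [|R IH]; first by rewrite mul0n addn0 big_geq.
rewrite mulSnr addnA (big_cat_nat _ (n := O0 + R * q)) ?leq_addr //.
rewrite (@big_nat_recr _ _ _ R 0) // mulnDr leq_add //.
apply: block_le => u Hu; rewrite raw_out //=.
by case: (#|nth set0 sets R| == q).
Qed.

Lemma sum_sets : \sum_(0 <= r < R0) (#|nth set0 sets r| == q) = 'C(n, q).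
Proof.
rewrite /R0 -[in RHS](card_ord n) -card_draws cardsE -sum1_card big_mkcond /=.
rewrite -(big_nth set0 xpredT (fun Y : {set 'I_n} => nat_of_bool (#|Y| == q))).
rewrite /sets big_enum [LHS]big_mkcond [RHS]big_mkcond; apply: eq_bigr => Y _ /=.
by rewrite ?unfold_in /=; case: eqnP => /= [->|/eqP/negbTE ->]; rewrite ?eqxx.
Qed.

Lemma op_count_circ : 0 < q -> op_count circ <= 2 * n.+1 + n.+1 * W + q * 'C(n, q).
Proof.
move=> q0; rewrite /op_count /circ count_mk.
apply: (@leq_trans (\sum_(0 <= k < N0) is_op (raw k))).
  apply: leq_sum => k _; rewrite /gg; case: (raw k) => //= a b'; by case: ifP.
rewrite (big_cat_nat _ (n := O0)) ?leq0n ?O0_N0 //= -sum_sets.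
apply: leq_add; last exact: out_count.
apply: (@leq_trans (\sum_(0 <= k < O0) 1)).
  by apply: leq_sum => k _; exact: leq_b1.
by rewrite sum_nat_const_nat muln1 subn0 /O0 /T0; lia.
Qed.

End Construction.

Lemma bd_ge_sum n q k : k <= q.+1 -> \sum_(0 <= i < k) 'C(n, i) <= binom_down n q.
Proof.
move=> Hk; rewrite /binom_down -(big_mkord (fun _ => true)) [X in _ <= X](big_cat_nat _ (n := k)) //=.
exact: leq_addr.
Qed.

Lemma bd_ge n q i : i <= q -> 'C(n, i) <= binom_down n q.
Proof.
move=> Hi; apply: leq_trans (@bd_ge_sum n q i.+1 Hi); rewrite big_nat_recr //=.
exact: leq_addl.
Qed.

Lemma final_bound n q : 0 < q ->
  2 * n.+1 + n.+1 * W n q + q * 'C(n, q) <= 6 * q * binom_down n q.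
Proof.
move=> q0; set bd := binom_down n q.
have hC : 'C(n, q) <= bd := bd_ge n (leqnn q).
have h2 : \sum_(0 <= i < 2) 'C(n, i) <= bd by apply: bd_ge_sum; lia.
rewrite !big_nat_recr //= big_geq // bin0 bin1 add0n in h2.
have qC : q * 'C(n, q) <= q * bd by rewrite leq_mul2l hC orbT.
rewrite /W; case: ltnP => Hq.
- have h3 : \sum_(0 <= i < 3) 'C(n, i) <= bd by apply: bd_ge_sum; lia.
  rewrite !big_nat_recr //= big_geq // bin0 bin1 bin2 add0n in h3.
  have od := odd_double_half (n * n.-1).
  have e1 : n * n.-1 + n = n * n by case: (n) => // m; rewrite mulnS /=; lia.
  have q2 : 2 * bd <= q * bd by rewrite leq_mul2r Hq orbT.
  have e2 : 6 * q * bd = 6 * (q * bd) by rewrite mulnA.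
  rewrite e2.
  have e3 : n.+1 * n.+1 = n * n + 2 * n + 1 by rewrite mulSn mulnS; lia.
  rewrite e3.
  move: od e1 h3 q2 qC hC; set X := n * n.-1; set H := X./2; set Y := n * n; set Z := q * bd;
  set C2 := q * 'C(n, q); rewrite -!muln2; lia.
- have q1 : q = 1 by lia.
  subst q; rewrite !mul1n muln1 in qC *; lia.
Qed.

Theorem mainTheorem7 :
  exists C : nat,
    forall b q : nat, 1 <= q ->
      let n := 2 ^ b in
      exists (c : circuit n) (out : {set 'I_n} -> nat),
        [/\ wf_circuit c,
            op_count c <= C * q * binom_down n q,
            (forall Y : {set 'I_n}, #|Y| = q -> out Y < size c) &
            (forall (S : Type) (idx : S) (op : Monoid.com_law idx)
                    (f : 'I_n -> S) (Y : {set 'I_n}),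
                #|Y| = q ->
                gate_value op c f (out Y) = \big[op/idx]_(x in ~: Y) f x)].
Proof.
exists 6 => b q q1 n.
exists (circ n q), (@out n q); split.
- exact: wf_circ.
- exact: leq_trans (op_count_circ n q1) (final_bound n q1).
- move=> Y HY; rewrite size_mkseq /out /N0.
  have rR : index Y (sets n) < R0 n by rewrite /R0 index_mem /sets mem_enum.
  have : (index Y (sets n)).+1 * q <= R0 n * q by rewrite leq_mul2r rR orbT.
  rewrite mulSnr; set P := index Y (sets n) * q; set P2 := R0 n * q; lia.
- move=> S idx op f Y HY.
  have := V_out op f HY (u := q.-1) (ltac:(lia)).
  rewrite subnn /lo /= B0 => <-.
  by [].
Qed.
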